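(* For any choice of $\hat R>0$, the truncated perturbed adversary $\mathcal{A}'_\sigma$ is $R$-bounded with $R=1+\sqrt d\hat R$, and is $(r,\frac1T)$-centrally bounded for every $r\ge\sigma\sqrt{2\ln T}$.
   Context: Single parameter setting with Greedy (least squares estimate $\hat\beta^t$ at round $t$). Given an adaptive adversary that at each round picks $\mu_1^t,\dots,\mu_k^t$ with $\|\mu_i^t\|\le1$ as a function of the history, the adversary $\mathcal{A}'_\sigma$ outputs contexts $x_i^t=\mu_i^t+e_i^t$ where $e_i^t=(Q^t)^{-1}z_i^t$, $Q^t$ is an orthonormal matrix with $Q^t\hat\beta^t=(\|\hat\beta^t\|,0,\dots,0)$, and the coordinates of each $z_i^t\in\mathbb{R}^d$ are drawn independently from $\mathcal{N}(0,\sigma^2)$ conditioned on lying in $[-\hat R,\hat R]$. $R$-bounded: with probability 1, $\|x_i^t\|\le R$ for all $i,t$. $(r,\delta')$-centrally bounded: for each history, arm $i$ and fixed unit vector $w$, $w\cdot e_i^t\le r$ with probability at least $1-\delta'$. *)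

(* Defs.v *)
From HB Require Import structures.
From mathcomp Require Import all_boot all_order all_algebra.
From mathcomp Require Import all_classical all_reals all_analysis.
Set Implicit Arguments. Unset Strict Implicit. Unset Printing Implicit Defensive.
Import Order.TTheory GRing.Theory Num.Theory.
Import numFieldNormedType.Exports.
Local Open Scope classical_set_scope.
Local Open Scope ring_scope.

Section Defs.
Variable R : realType.

Definition enorm (d : nat) (v : 'cV[R]_d) : R :=
  Num.sqrt (\sum_(i < d) v i ord0 ^+ 2).
Definition dotv (d : nat) (v w : 'cV[R]_d) : R :=
  \sum_(i < d) v i ord0 * w i ord0.

Definition orthonormal_mx (d : nat) (Q : 'M[R]_d) : Prop := Q^T *m Q = 1%:M.

Definition first_coord_vec (d : nat) (a : R) : 'cV[R]_d :=
  \col_(i < d) (if val i == 0%N then a else 0).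

(* Density of N(0, sigma^2) conditioned on lying in [-Rh, Rh]. *)
Definition gauss_kernel (sigma x : R) : R := expR (- (x ^+ 2) / (2 * sigma ^+ 2)).
Definition tg_box (Rh : R) : set R := [set x : R | - Rh <= x <= Rh].
Definition tg_norm (sigma Rh : R) : R :=
  fine (\int[lebesgue_measure]_(x in tg_box Rh) (gauss_kernel sigma x)%:E)%E.
Definition tg_pdf (sigma Rh x : R) : R :=
  if `|x| <= Rh then gauss_kernel sigma x / tg_norm sigma Rh else 0.

(* Expectation of F(z_0, z_1, ..., z_{n-1}) for z_k i.i.d. with density
   tg_pdf, computed as an iterated Lebesgue integral (coordinate 0 outermost). *)
Fixpoint iter_tg_int (sigma Rh : R) (n : nat) (F : (nat -> R) -> \bar R) : \bar R :=
  match n with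
  | 0 => F (fun _ => 0)
  | n'.+1 =>
      (\int[lebesgue_measure]_t
         ((tg_pdf sigma Rh t)%:E *
          iter_tg_int sigma Rh n' (fun g => F (fun k => if k is k'.+1 then g k' else t))))%E
  end.

Definition tg_prob (d : nat) (sigma Rh : R) (A : set 'cV[R]_d) : \bar R :=
  iter_tg_int sigma Rh d (fun g => (\1_A (\col_(i < d) g i) : R)%:E).

End Defs.

(* Main.v *)
Require Import Defs.
From HB Require Import structures.
From mathcomp Require Import all_boot all_order all_algebra.
From mathcomp Require Import all_classical all_reals all_analysis.
From mathcomp Require Import ring lra.
Import Order.TTheory GRing.Theory Num.Theory.
Import numFieldNormedType.Exports.
Local Open Scope classical_set_scope.
Local Open Scope ring_scope.

Section V.
Variable R : realType.
Variable d : nat.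
Implicit Types (a b : 'I_d -> R).

Lemma lagrange a b :
  \sum_i \sum_j (a i * b j - a j * b i) ^+ 2 =
  (\sum_i a i ^+ 2) * (\sum_j b j ^+ 2) + (\sum_i b i ^+ 2) * (\sum_j a j ^+ 2)
  - 2 * ((\sum_i a i * b i) * (\sum_j a j * b j)).
Proof.
rewrite !big_distrlr mulr_sumr -big_split -sumrB /=; apply: eq_bigr => i _.
rewrite mulr_sumr -big_split -sumrB /=; apply: eq_bigr => j _; ring.
Qed.

Lemma cs a b : (\sum_i a i * b i) ^+ 2 <= (\sum_i a i ^+ 2) * (\sum_i b i ^+ 2).
Proof.
have := lagrange a b.
have : 0 <= \sum_i \sum_j (a i * b j - a j * b i) ^+ 2.
  by apply: sumr_ge0 => i _; apply: sumr_ge0 => j _; exact: sqr_ge0.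
move=> h1 h2; rewrite h2 in h1; move: h1.
set A := \sum_i a i ^+ 2; set B := \sum_i b i ^+ 2; set C := \sum_i a i * b i.
rewrite -/A -/B -/C; nra.
Qed.

Lemma tri a b : Num.sqrt (\sum_i (a i + b i) ^+ 2) <=
  Num.sqrt (\sum_i a i ^+ 2) + Num.sqrt (\sum_i b i ^+ 2).
Proof.
set A := \sum_i a i ^+ 2; set B := \sum_i b i ^+ 2; set C := \sum_i a i * b i.
have A0 : 0 <= A by apply: sumr_ge0 => i _; exact: sqr_ge0.
have B0 : 0 <= B by apply: sumr_ge0 => i _; exact: sqr_ge0.
have -> : \sum_i (a i + b i) ^+ 2 = A + B + 2 * C.
  rewrite /A /B /C mulr_sumr -!big_split /=; apply: eq_bigr => i _; ring.
have hC : C <= Num.sqrt A * Num.sqrt B.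
  rewrite -sqrtrM //; apply: le_trans (ler_norm C) _.
  by rewrite -sqrtr_sqr ler_sqrt ?cs // mulr_ge0.
have s0 : 0 <= Num.sqrt A + Num.sqrt B by rewrite addr_ge0 ?sqrtr_ge0.
rewrite -(ger0_norm s0) -sqrtr_sqr ler_sqrt; last by rewrite sqr_ge0.
have hA := sqr_sqrtr A0; have hB := sqr_sqrtr B0.
set sA := Num.sqrt A in hA hC *; set sB := Num.sqrt B in hB hC *.
rewrite sqrrD hA hB; lra.
Qed.


Lemma sumsq_mx (v : 'cV[R]_d) : \sum_i v i ord0 ^+ 2 = (v^T *m v) ord0 ord0.
Proof. by rewrite !mxE; apply: eq_bigr => i _; rewrite !mxE expr2. Qed.

Lemma dot_mx (a b : 'cV[R]_d) : dotv a b = (a^T *m b) ord0 ord0.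
Proof. by rewrite /dotv !mxE; apply: eq_bigr => i _; rewrite !mxE. Qed.

Lemma enorm_tri (u v : 'cV[R]_d) : enorm (u + v) <= enorm u + enorm v.
Proof.
rewrite /enorm; under eq_bigr do rewrite mxE.
exact: (tri (fun i => u i ord0) (fun i => v i ord0)).
Qed.

Lemma inv_orth (Q : 'M[R]_d) : orthonormal_mx Q -> invmx Q = Q^T.
Proof.
rewrite /orthonormal_mx => H.
have [_ uQ] := mulmx1_unit H.
by rewrite -[invmx Q]mul1mx -H -mulmxA mulmxV // mulmx1.
Qed.

Lemma orth_r (Q : 'M[R]_d) : orthonormal_mx Q -> Q *m Q^T = 1%:M.
Proof. by move=> H; apply: mulmx1C. Qed.

Lemma enorm_orth (Q : 'M[R]_d) (z : 'cV[R]_d) : orthonormal_mx Q ->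
  enorm (Q^T *m z) = enorm z.
Proof.
move=> H; rewrite /enorm !sumsq_mx trmx_mul trmxK.
by rewrite -mulmxA (mulmxA Q) orth_r // mul1mx.
Qed.

Lemma enorm_orth' (Q : 'M[R]_d) (z : 'cV[R]_d) : orthonormal_mx Q ->
  enorm (Q *m z) = enorm z.
Proof.
move=> H; rewrite /enorm !sumsq_mx trmx_mul.
by rewrite -mulmxA (mulmxA Q^T) H mul1mx.
Qed.

Lemma dot_orth (Q : 'M[R]_d) (w z : 'cV[R]_d) :
  dotv w (Q^T *m z) = dotv (Q *m w) z.
Proof. by rewrite !dot_mx trmx_mul mulmxA. Qed.

Lemma enorm_box (z : 'cV[R]_d) (Rh : R) : 0 <= Rh ->
  (forall i, `|z i ord0| <= Rh) -> enorm z <= Num.sqrt (d%:R) * Rh.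
Proof.
move=> Rh0 hz; rewrite /enorm -(ger0_norm Rh0) -sqrtr_sqr -sqrtrM ?ler0n //.
rewrite ler_sqrt ?mulr_ge0 ?ler0n ?sqr_ge0 //.
apply: le_trans (_ : \sum_(i < d) Rh ^+ 2 <= _).
  apply: ler_sum => i _; have := hz i; rewrite ler_norml => /andP[h1 h2].
  nra.
by rewrite sumr_const card_ord mulr_natl.
Qed.
End V.

Section S.
Variable R : realType.
Notation mu := (@lebesgue_measure R).
Variables (sigma Rh : R).
Hypothesis s0 : 0 < sigma.
Hypothesis Rh0 : 0 < Rh.
Notation k := (gauss_kernel sigma).
Notation N := (tg_norm sigma Rh).
Notation box := (`[- Rh, Rh]%classic : set R).

Lemma tg_box_itv : tg_box Rh = box.
Proof. by apply/funext => x; rewrite /tg_box /= in_itv. Qed.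

Lemma k_cont : continuous k.
Proof.
move=> x; rewrite /gauss_kernel.
apply: continuous_comp; last exact: continuous_expR.
apply: cvgM; last exact: cvg_cst.
apply: cvgN; exact: (cvgM cvg_id cvg_id).
Qed.

Lemma k_gt0 x : 0 < k x.
Proof. exact: expR_gt0. Qed.

Lemma cint (f : R -> R) (a b : R) : continuous f ->
  mu.-integrable `[a, b] (EFin \o f).
Proof.
move=> cf; apply: continuous_compact_integrable; first exact: segment_compact.
exact: continuous_subspaceT.
Qed.

Lemma le_integral_nm (f g : R -> \bar R) : (forall x, (0 <= f x)%E) ->
  (forall x, (f x <= g x)%E) -> (\int[mu]_x f x <= \int[mu]_x g x)%E.
Proof.
move=> f0 fg.
have g0 x : (0 <= g x)%E by apply: le_trans (f0 x) (fg x).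
rewrite /integral !patch_setT.
have -> : (f^\-)%E = cst 0%E.
  by apply/funext => x; apply: (ge0_funenegE (D := setT)); [move=> y _; exact: f0|by rewrite in_setT].
have -> : (g^\-)%E = cst 0%E.
  by apply/funext => x; apply: (ge0_funenegE (D := setT)); [move=> y _; exact: g0|by rewrite in_setT].
apply: leeB => //; apply: ereal_sup_le => _ [h /= hf <-]; exists h => //= x.
apply: le_trans (hf x) _; rewrite !funeposE; by rewrite ge_max !le_max lexx orbT (fg x).
Qed.

Lemma le_integral_nm2 (f g : R -> \bar R) : (forall x, (0 <= f x)%E) ->
  (forall x, (g x <= f x)%E) -> (\int[mu]_x g x <= \int[mu]_x f x)%E.
Proof.
move=> f0 gf; rewrite [X in (X <= _)%E]integralE.
apply: (@le_trans _ _ (\int[mu]_x (g^\+)%E x)%E).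
  rewrite -[X in (_ <= X)%E]sube0; apply: leeB => //; apply: integral_ge0 => x _; exact: funeneg_ge0.
apply: le_integral_nm => x; first exact: funepos_ge0.
by rewrite funeposE ge_max f0 gf.
Qed.
Lemma N_Rint : N = \int[mu]_(x in box) k x.
Proof. by rewrite /tg_norm tg_box_itv. Qed.

Lemma k_mono x y : x ^+ 2 <= y ^+ 2 -> k y <= k x.
Proof.
move=> xy; rewrite /gauss_kernel ler_expR !mulNr lerN2 ler_pM2r //.
by rewrite invr_gt0 mulr_gt0 // exprn_gt0.
Qed.

Lemma N_gt0 : 0 < N.
Proof.
rewrite N_Rint; apply: (@lt_le_trans _ _ (\int[mu]_(x in box) (k Rh))).
  rewrite Rintegral_cst //.
  have mb : mu box = (Rh + Rh)%:E.
    by rewrite lebesgue_measure_itv /= lte_fin gtrN // opprK.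
  have H : 0 < k Rh * fine (mu box) by rewrite mb /= mulr_gt0 ?k_gt0 ?addr_gt0.
  exact: H.
apply: le_Rintegral => //; [apply: cint; exact: cst_continuous|apply: cint; exact: k_cont|].
move=> x; rewrite /= in_itv /= => /andP[h1 h2]; apply: k_mono.
rewrite -ler_sqrt ?sqr_ge0 // !sqrtr_sqr (ger0_norm (ltW Rh0)).
by apply/(@ler_normlP R); rewrite h2 -lerNl h1.
Qed.


Lemma pdf_int (h : R -> R) : continuous h ->
  (\int[mu]_x (tg_pdf sigma Rh x * h x)%:E =
   ((\int[mu]_(x in box) (k x * h x)) / N)%:E)%E.
Proof.
move=> ch.
have ikh : mu.-integrable box (EFin \o (fun x => k x * h x)).
  by apply: cint => x; apply: cvgM; [exact: k_cont|exact: ch].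
rewrite -RintegralZr //.
rewrite /Rintegral fineK; last first.
  apply: integrable_fin_num => //; apply: cint => x.
  by apply: cvgM; [apply: cvgM; [exact: k_cont|exact: ch]|exact: cvg_cst].
rewrite integral_mkcond; apply: eq_integral => x _.
rewrite /patch /tg_pdf mem_setE /= in_itv /=.
case: ifPn => hx.
  rewrite ifT; first by rewrite mulrAC.
  by move: hx; rewrite ler_norml => /andP[h1 h2]; apply/andP; split.
case: ifPn => [/andP[h1 h2]|_]; last by rewrite mul0r.
by move: hx; rewrite ler_norml; apply: contraNP => _; apply/andP; split; rewrite // lerNl.
Qed.


Lemma pdf_ge0 x : 0 <= tg_pdf sigma Rh x.
Proof.
rewrite /tg_pdf; case: ifP => // _.
by rewrite divr_ge0 ?(ltW (k_gt0 _)) ?(ltW N_gt0).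
Qed.

Lemma pdf_total : (\int[mu]_x (tg_pdf sigma Rh x)%:E = 1)%E.
Proof.
under eq_integral do rewrite -[tg_pdf _ _ _]mulr1.
rewrite pdf_int; last exact: cst_continuous.
under eq_Rintegral do rewrite mulr1.
by rewrite -N_Rint divff // gt_eqF // N_gt0.
Qed.

Lemma iter_ge0 n (F : (nat -> R) -> \bar R) : (forall g, (0 <= F g)%E) ->
  (0 <= iter_tg_int sigma Rh n F)%E.
Proof.
elim: n F => [|n IH] F F0 /=; first exact: F0.
apply: integral_ge0 => t _; apply: mule_ge0; first by rewrite lee_fin pdf_ge0.
exact: IH.
Qed.

Lemma iter_one n (F : (nat -> R) -> \bar R) :
  (forall g, (forall i, (i < n)%N -> `|g i| <= Rh) -> F g = 1%E) ->
  iter_tg_int sigma Rh n F = 1%E.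
Proof.
elim: n F => [|n IH] F HF /=; first by apply: HF.
rewrite -pdf_total; apply: eq_integral => t _.
case: (boolP (`|t| <= Rh)) => ht.
  rewrite IH ?mule1 // => g Hg; apply: HF => -[|i] //= Hi; exact: Hg.
by rewrite /tg_pdf (negbTE ht) mul0e.
Qed.

Lemma int_shift (G : R -> R) (u v c u' v' : R) : continuous G -> u <= v ->
  u' = u + c -> v' = v + c ->
  \int[mu]_(x in `[u, v]) G (x + c) = \int[mu]_(x in `[u', v']) G x.
Proof.
move=> cG uv -> ->.
have derM : derive1 (shift c : R -> R) = cst 1.
  by apply/funext => z; rewrite derive1E; exact: (@derive_val _ _ _ _ _ _ _ (is_derive_shift z 1 c)).
have := @integration_by_substitution_increasing R (shift c) G _ _ uv.
rewrite /Rintegral => ->//=; last 6 first.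
  - by move=> a b _ _ ab; rewrite ltrD2r.
  - by rewrite derM => z _; exact: cvg_cst.
  - by rewrite derM; exact: is_cvg_cst.
  - by rewrite derM; exact: is_cvg_cst.
  - split => //.
    + apply: cvg_at_right_filter.
      by apply: cvgD => //; exact: cvg_cst.
    + apply: cvg_at_left_filter.
      by apply: cvgD => //; exact: cvg_cst.
  - exact: continuous_subspaceT.
rewrite derM; congr fine; apply: eq_integral => x _ /=; by rewrite mulr1.
Qed.

Lemma int_split (G : R -> R) (u m v : R) : continuous G -> u <= m -> m <= v ->
  \int[mu]_(x in `[u, v]) G x =
  \int[mu]_(x in `[u, m]) G x + \int[mu]_(x in `[m, v]) G x.
Proof.
move=> cG um mv.
have := @Rintegral_itvB R G (BLeft u) (BRight v) m (cint G u v cG).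
rewrite !bnd_simp => /(_ um mv) H.
rewrite -(@Rintegral_itv_obnd_cbnd R m (BRight v) G); last first.
  apply: integrableS (cint G m v cG) => //.
  by apply: subset_itvr; rewrite bnd_simp.
by rewrite -H addrC subrK.
Qed.


Lemma kN x : k (- x) = k x.
Proof. by rewrite /gauss_kernel sqrrN. Qed.

Lemma kshift_cont c : continuous (fun x => k (x + c)).
Proof.
move=> x; apply: continuous_comp; last exact: k_cont.
by apply: cvgD; [exact: cvg_id|exact: cvg_cst].
Qed.

Lemma J_le_pos m : 0 <= m ->
  \int[mu]_(x in box) k (x + - m) <= \int[mu]_(x in box) k x.
Proof.
move=> m0.
have [m2a|m2a] := leP m (Rh + Rh).
  rewrite (@int_split _ (- Rh) (m - Rh) Rh); last 3 first.
  - exact: kshift_cont.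
  - lra.
  - lra.
  rewrite [X in _ <= X](@int_split _ (- Rh) (Rh - m) Rh); last 3 first.
  - exact: k_cont.
  - lra.
  - lra.
  rewrite (@int_shift k (- Rh) (m - Rh) (- m) (- Rh - m) (- Rh)); last 4 first.
  - exact: k_cont.
  - lra.
  - by [].
  - lra.
  rewrite (@int_shift k (m - Rh) Rh (- m) (- Rh) (Rh - m)); last 4 first.
  - exact: k_cont.
  - lra.
  - lra.
  - by [].
  rewrite addrC lerD2l.
  rewrite -(@int_shift k (Rh - m) Rh (- (Rh + Rh)) (- Rh - m) (- Rh)); last 4 first.
  - exact: k_cont.
  - lra.
  - lra.
  - lra.
  apply: le_Rintegral => //.
  - by apply: cint; exact: kshift_cont.
  - by apply: cint; exact: k_cont.
  move=> x; rewrite /= in_itv /= => /andP[h1 h2]; apply: k_mono.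
  by rewrite -subr_ge0; nra.
apply: le_Rintegral => //.
- by apply: cint; exact: kshift_cont.
- by apply: cint; exact: k_cont.
move=> x; rewrite /= in_itv /= => /andP[h1 h2]; apply: k_mono.
by rewrite -subr_ge0; nra.
Qed.

Lemma int_oppr (G : R -> R) : continuous G ->
  \int[mu]_(x in box) G x = \int[mu]_(x in box) G (- x).
Proof.
move=> cG.
have H := @integration_by_substitution_oppr R G (- Rh) Rh.
rewrite opprK in H.
have h1 : - Rh <= Rh by rewrite -subr_ge0 opprK addr_ge0 // ltW.
have h2 : {within `[- Rh, Rh], continuous G} by exact: continuous_subspaceT.
by rewrite /Rintegral (H h1 h2).
Qed.

Lemma J_le m : \int[mu]_(x in box) k (x + - m) <= \int[mu]_(x in box) k x.
Proof.
have [m0|m0] := leP 0 m; first exact: J_le_pos.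
rewrite int_oppr; last exact: kshift_cont.
have e : forall x, k (- x + - m) = k (x + - - m) by move=> x; rewrite -opprD kN opprK.
under eq_Rintegral => x _ do rewrite e.
by apply: J_le_pos; rewrite oppr_ge0 ltW.
Qed.

Lemma mgf_box b :
  \int[mu]_(x in box) (k x * expR (b * x)) <=
  expR (b ^+ 2 * sigma ^+ 2 / 2) * \int[mu]_(x in box) k x.
Proof.
have e x : k x * expR (b * x) =
    expR (b ^+ 2 * sigma ^+ 2 / 2) * k (x + - (b * sigma ^+ 2)).
  rewrite /gauss_kernel -!expRD; congr expR.
  have sn : sigma != 0 by rewrite gt_eqF.
  by field.
under eq_Rintegral => x _ do rewrite e.
rewrite RintegralZl //; last by apply: cint; exact: kshift_cont.
by rewrite ler_pM2l ?expR_gt0 //; exact: J_le.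
Qed.

Lemma chern (lam r : R) : 0 <= lam -> forall n (v : nat -> R) (c : R)
  (F : (nat -> R) -> \bar R),
  (forall g, (0 <= F g)%E) ->
  (forall g : nat -> R, c + \sum_(i < n) v i * g i <= r -> F g = 1%E) ->
  ((1 - expR (lam * (c - r)) *
     expR (lam ^+ 2 * sigma ^+ 2 / 2 * \sum_(i < n) v i ^+ 2))%:E
   <= iter_tg_int sigma Rh n F)%E.
Proof.
move=> lam0 n; elim: n => [|n IH] v c F F0 F1 /=.
  rewrite big_ord0 mulr0 expR0 mulr1.
  have [cr|cr] := leP c r.
    rewrite F1; last by rewrite big_ord0 addr0.
    by rewrite lee_fin lerBlDr lerDl expR_ge0.
  apply: le_trans (F0 _); rewrite lee_fin subr_le0 -expR0 ler_expR.
  by rewrite mulr_ge0 // subr_ge0 ltW.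
set S' := \sum_(i < n) v i.+1 ^+ 2.
set A := expR (lam * (c - r)) * expR (lam ^+ 2 * sigma ^+ 2 / 2 * S').
set b := lam * v 0%N.
have low t : ((tg_pdf sigma Rh t * (1 - A * expR (b * t)))%:E <=
    (tg_pdf sigma Rh t)%:E *
    iter_tg_int sigma Rh n (fun g => F (fun k => if k is k'.+1 then g k' else t)))%E.
  rewrite EFinM; apply: lee_wpmul2l; first by rewrite lee_fin pdf_ge0.
  apply: le_trans; last first.
    apply: (IH (fun i => v i.+1) (c + v 0%N * t)) => [g|g Hg]; first exact: F0.
    by apply: F1; rewrite big_ord_recl /= addrA.
  rewrite lee_fin lerB // le_eqVlt; apply/orP; left; apply/eqP.
  rewrite /A /b -!expRD; congr expR; rewrite /S'; ring.
apply: le_trans; last first.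
  apply: le_integral_nm2; last exact: low.
  move=> t; apply: mule_ge0; first by rewrite lee_fin pdf_ge0.
  by apply: iter_ge0 => g; exact: F0.
have hc : continuous (fun t => 1 - A * expR (b * t)).
  move=> x; apply: cvgB; first exact: cvg_cst.
  apply: cvgM; first exact: cvg_cst.
  apply: continuous_comp; last exact: continuous_expR.
  by apply: cvgM; [exact: cvg_cst|exact: cvg_id].
rewrite pdf_int // lee_fin.
have e x : k x * (1 - A * expR (b * x)) = k x - A * (k x * expR (b * x)).
  by ring.
under eq_Rintegral => x _ do rewrite e.
have kec : continuous (fun x => k x * expR (b * x)).
  move=> x; apply: cvgM; first exact: k_cont.
  apply: continuous_comp; last exact: continuous_expR.
  by apply: cvgM; [exact: cvg_cst|exact: cvg_id].
rewrite RintegralB //; [|by apply: cint; exact: k_cont|]; last first.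
  by apply: cint => x; apply: cvgM; [exact: cvg_cst|exact: kec].
rewrite RintegralZl //; last exact: cint.
rewrite -N_Rint ler_pdivlMr ?N_gt0 //.
have hM := mgf_box b; rewrite -N_Rint in hM.
have A0 : 0 <= A by rewrite /A mulr_ge0 ?expR_ge0.
have hAM := ler_wpM2l A0 hM.
have -> : expR (lam * (c - r)) * expR (lam ^+ 2 * sigma ^+ 2 / 2 * \sum_(i < n.+1) v i ^+ 2)
  = A * expR (b ^+ 2 * sigma ^+ 2 / 2).
  by rewrite big_ord_recl /A /b /S' -!expRD; congr expR; ring.
have N0 := N_gt0.
nra.
Qed.

End S.

Theorem lemma6 (R : realType) (d : nat) (sigma Rh : R) (T : nat) :
  0 < sigma -> 0 < Rh -> (0 < T)%N ->
  (* R-bounded with R = 1 + sqrt d * Rh *)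
  (forall (bhat : 'cV[R]_d) (Q : 'M[R]_d) (mu : 'cV[R]_d),
      orthonormal_mx Q -> Q *m bhat = first_coord_vec d (enorm bhat) ->
      enorm mu <= 1 ->
      tg_prob sigma Rh
        [set z | enorm (mu + invmx Q *m z) <= 1 + Num.sqrt (d%:R) * Rh] = 1%E)
  /\
  (* (r, 1/T)-centrally bounded for every r >= sigma sqrt(2 ln T) *)
  (forall r : R, sigma * Num.sqrt (2 * ln (T%:R)) <= r ->
   forall (bhat : 'cV[R]_d) (Q : 'M[R]_d),
      orthonormal_mx Q -> Q *m bhat = first_coord_vec d (enorm bhat) ->
   forall w : 'cV[R]_d, enorm w = 1 ->
      ((1 - T%:R^-1)%:E <= tg_prob sigma Rh [set z | (dotv w (invmx Q *m z) <= r)%R])%E).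
Proof.
move=> s0 Rh0 T0; split.
  move=> bhat Q mu HQ _ Hmu; rewrite /tg_prob.
  refine (@iter_one R sigma Rh s0 Rh0 d _ _) => g Hg.
  rewrite indicE mem_set //= inv_orth //.
  apply: le_trans (@enorm_tri R d _ _) _; rewrite enorm_orth //; apply: lerD => //.
  apply: enorm_box; first exact: ltW.
  by move=> i; rewrite mxE; apply: Hg; exact: ltn_ord.
move=> r hr bhat Q HQ _ w hw.
have r0 : 0 <= r by apply: le_trans hr; rewrite mulr_ge0 ?sqrtr_ge0 ?ltW.
set lam := r / sigma ^+ 2.
have lam0 : 0 <= lam by rewrite divr_ge0 ?sqr_ge0.
set v := fun i : nat => if @insub _ (fun k => (k < d)%N) 'I_d i is Some j then (Q *m w) j ord0 else 0.
have hv : \sum_(i < d) v i ^+ 2 = 1.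
  have e := @enorm_orth' R d Q w HQ; rewrite hw /enorm in e.
  set S := \sum_i (Q *m w) i ord0 ^+ 2 in e.
  have S0 : 0 <= S by apply: sumr_ge0 => i _; exact: sqr_ge0.
  have <- : S = 1 by rewrite -(sqr_sqrtr S0) e expr1n.
  by apply: eq_bigr => i _; rewrite /v valK.
apply: le_trans; last first.
  apply: (@chern R sigma Rh s0 Rh0 lam r lam0 d v 0).
    by move=> g; rewrite lee_fin indicE ler0n.
  move=> g; rewrite add0r => hg.
  rewrite indicE mem_set //= inv_orth // dot_orth /dotv.
  apply: le_trans hg; rewrite le_eqVlt; apply/orP; left; apply/eqP.
  by apply: eq_bigr => i _; rewrite /v valK mxE.
rewrite hv mulr1 lee_fin lerD2l lerN2 -expRD.
have Tp : 0 < T%:R :> R by rewrite ltr0n.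
have -> : T%:R^-1 = expR (- ln (T%:R : R)) by rewrite expRN lnK // posrE.
rewrite ler_expR.
have sn : sigma != 0 by rewrite gt_eqF.
have -> : lam * (0 - r) + lam ^+ 2 * sigma ^+ 2 / 2 = - (r ^+ 2 / (2 * sigma ^+ 2)).
  by rewrite /lam; field.
rewrite lerN2 ler_pdivlMr ?mulr_gt0 ?exprn_gt0 //.
have L0 : 0 <= ln (T%:R : R) by rewrite ln_ge0 // ler1n.
have a0 : 0 <= sigma * Num.sqrt (2 * ln (T%:R : R)) by rewrite mulr_ge0 ?sqrtr_ge0 ?ltW.
have ha : (sigma * Num.sqrt (2 * ln (T%:R : R))) ^+ 2 = sigma ^+ 2 * (2 * ln (T%:R : R)).
  by rewrite exprMn sqr_sqrtr // mulr_ge0.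
have : (sigma * Num.sqrt (2 * ln (T%:R : R))) ^+ 2 <= r ^+ 2.
  by rewrite ler_pXn2r ?nnegrE.
rewrite ha; nra.
Qed.
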